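(* Let $S$ be $\mathbb{R}$ or $\mathbb{C}$, and let $\boldsymbol{\varepsilon}=(\varepsilon_1,\dots,\varepsilon_{n-1})$, $\boldsymbol{\delta}=(\delta_1,\dots,\delta_{n-1})$ satisfy $-1<\delta_i\le0\le\varepsilon_i$ for $i=1,\dots,n-1$. Then for every $A\in\mathbf{CP}^{\boldsymbol{\varepsilon}}_n(S)$ there exists $B\in\mathbf{CP}^{\boldsymbol{\delta}}_n(S)$ such that $b^{(k)}_{n,n}=a^{(k)}_{n,n}$ for all $k=1,\dots,n$, and for all $k$ and all $i,j\ge k$, $$\big|b^{(k)}_{i,j}-a^{(k)}_{i,j}\big|\le \max_{\min\{i,j\}\le \ell\le n-1}\left( \frac{\Big[\big(\frac{1+\varepsilon_\ell}{1+\delta_\ell}\big)^2-1\Big]\,|a^{(\ell)}_{\ell,\ell}|}{\prod_{p=\min\{i,j\}}^{\ell-1}(1+\delta_p)} + \sum_{m=\min\{i,j\}}^{\ell-1}\frac{(\varepsilon_m-\delta_m)\,|a^{(m)}_{m,m}|}{\prod_{p=\min\{i,j\}}^{m}(1+\delta_p)}\right).$$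
   Context: For an $n\times n$ complex matrix $A=(a_{i,j})$, Gaussian elimination without pivoting is the recursion $a^{(1)}_{i,j}=a_{i,j}$ and $a^{(k+1)}_{i,j}=a^{(k)}_{i,j}-a^{(k)}_{i,k}a^{(k)}_{k,j}/a^{(k)}_{k,k}$ for $k+1\le i,j\le n$, $k=1,\dots,n-1$ (defined when all pivots $a^{(k)}_{k,k}\ne0$); similarly $b^{(k)}_{i,j}$ for $B$. For $S\subseteq\mathbb{C}$ and $\boldsymbol{\varepsilon}=(\varepsilon_1,\dots,\varepsilon_{n-1})$ with each $\varepsilon_i>-1$, $\mathbf{CP}^{\boldsymbol{\varepsilon}}_n(S)$ is the set of invertible $A\in S^{n\times n}$ for which elimination without pivoting is defined and $|a^{(k)}_{i,j}|\le(1+\varepsilon_k)|a^{(k)}_{k,k}|$ for all $k=1,\dots,n-1$ and all $i,j\ge k$ with $(i,j)\ne(k,k)$. Empty products equal $1$ and empty sums equal $0$. *)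

(* Defs.v *)
From mathcomp Require Import all_boot all_order all_algebra.
From mathcomp Require Import complex.
From mathcomp Require Import all_reals.
Set Implicit Arguments. Unset Strict Implicit. Unset Printing Implicit Defensive.
Import Order.TTheory GRing.Theory Num.Theory.
Local Open Scope ring_scope.

Section GE.
Variables (C : numFieldType) (n : nat).

(* 1-based entry access: aent A i j = a_{i,j} for 1 <= i,j <= n (0 outside). *)
Definition aent (A : 'M[C]_n) (i j : nat) : C :=
  match (insub i.-1 : option 'I_n), (insub j.-1 : option 'I_n) with
  | Some i', Some j' => if (0 < i)%N && (0 < j)%N then A i' j' else 0
  | _, _ => 0
  end.

(* gel A k i j = a^{(k)}_{i,j} (1-based k, i, j), Gaussian elimination without
   pivoting:  a^{(1)} = A,
   a^{(k+1)}_{i,j} = a^{(k)}_{i,j} - a^{(k)}_{i,k} a^{(k)}_{k,j} / a^{(k)}_{k,k}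
   for k+1 <= i,j, and entries with i <= k or j <= k are left unchanged
   (they are never used). gel A 0 = gel A 1 = A. *)
Fixpoint gel (A : 'M[C]_n) (k : nat) : nat -> nat -> C :=
  match k with
  | 0 => aent A
  | k'.+1 =>
      let b := gel A k' in
      fun i j => if [&& (0 < k')%N, (k' < i)%N & (k' < j)%N]
                 then b i j - b i k' * b k' j / b k' k'
                 else b i j
  end.

(* CP^eps_n(S): eps is indexed 1..n-1 (values outside are irrelevant). *)
Definition CP (eps : nat -> C) (S : pred C) (A : 'M[C]_n) : Prop :=
  [/\ forall i j, A i j \in S,
      A \in unitmx,
      forall k, (1 <= k <= n.-1)%N -> gel A k k k != 0 &
      forall k i j, (1 <= k <= n.-1)%N -> (k <= i <= n)%N -> (k <= j <= n)%N ->
        (i, j) != (k, k) ->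
        `|gel A k i j| <= (1 + eps k) * `|gel A k k k| ].

Definition ge_bound (eps delta : nat -> C) (A : 'M[C]_n) (i j : nat) : C :=
  let m0 := minn i j in
  \big[Num.max/0]_(m0 <= l < n)
    ( ((((1 + eps l) / (1 + delta l)) ^+ 2 - 1) * `|gel A l l l|)
        / (\prod_(m0 <= p < l) (1 + delta p))
      + \sum_(m0 <= m < l)
          ((eps m - delta m) * `|gel A m m m|)
            / (\prod_(m0 <= p < m.+1) (1 + delta p)) ).

End GE.

Definition Sdom (C : numClosedFieldType) (isR : bool) : pred C :=
  fun x => if isR then x \is Num.real else true.

(* Main.v *)
Require Import Defs.
From mathcomp Require Import all_boot all_order all_algebra.
From mathcomp Require Import complex.
From mathcomp Require Import all_reals.
From mathcomp Require Import zify ring lra.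
Set Implicit Arguments. Unset Strict Implicit. Unset Printing Implicit Defensive.
Import Order.TTheory GRing.Theory Num.Theory.
Local Open Scope ring_scope.


Section Aux.
Variable C : numClosedFieldType.
Implicit Types F : nat -> C.

Lemma max_ge0 (x y : C) : 0 <= x -> 0 <= y -> 0 <= Num.max x y.
Proof. by rewrite /Order.max; case: ifP. Qed.

Lemma max_leX (x y X : C) : x <= X -> y <= X -> Num.max x y <= X.
Proof. by rewrite /Order.max; case: ifP. Qed.

Lemma my_bigmax_le a b F X : 0 <= X -> (forall l, (a <= l < b)%N -> F l <= X) ->
  \big[Num.max/0]_(a <= l < b) F l <= X.
Proof.
move=> X0 HF; rewrite big_nat_cond.
apply: (big_ind (fun x => x <= X)) => //; first by move=> x y hx hy; exact: max_leX.
by move=> i /andP[Hi _]; apply: HF.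
Qed.

Lemma my_bigmax_real a b F : (forall l, (a <= l < b)%N -> F l \is Num.real) ->
  \big[Num.max/0]_(a <= l < b) F l \is Num.real.
Proof.
move=> HF; rewrite big_nat_cond.
apply: (big_ind (fun x => x \is Num.real)) => //; first by move=> x y hx hy; exact: max_real.
by move=> i /andP[Hi _]; apply: HF.
Qed.

Lemma my_le_bigmax b F : forall a l, (a <= l < b)%N ->
  (forall l, (a <= l < b)%N -> F l \is Num.real) ->
  F l <= \big[Num.max/0]_(a <= i < b) F i.
Proof.
move=> a; move Hd: (b - a)%N => d; elim: d a Hd => [|d IH] a Hd l Hl HF.
  by exfalso; move: Hl Hd => /andP[H1 H2] /eqP; rewrite subn_eq0; lia.
have Hab : (a < b)%N by lia.
rewrite big_ltn //.
have Hr : \big[Num.max/0]_(a.+1 <= i < b) F i \is Num.real.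
  by apply: my_bigmax_real => k Hk; apply: HF; lia.
have Fa : F a \is Num.real by apply: HF; lia.
rewrite comparable_le_max ?real_comparable //.
case: (ltngtP a l) => Hal.
- apply/orP; right; apply: IH; first lia. lia. by move=> k Hk; apply: HF; lia.
- lia.
- by rewrite Hal lexx.
Qed.
Lemma my_bigmax_ge0 b F : forall a, (forall l, (a <= l < b)%N -> F l \is Num.real) ->
  0 <= \big[Num.max/0]_(a <= i < b) F i.
Proof.
move=> a; move Hd: (b - a)%N => d; elim: d a Hd => [|d IH] a Hd HF.
  by rewrite big_geq // -subn_eq0 Hd.
have Hab : (a < b)%N by lia.
rewrite big_ltn //.
have Hr : \big[Num.max/0]_(a.+1 <= i < b) F i \is Num.real.
  by apply: my_bigmax_real => k Hk; apply: HF; lia.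
have Fa : F a \is Num.real by apply: HF; lia.
rewrite comparable_le_max ?real_comparable //.
by apply/orP; right; apply: IH; [lia | move=> k Hk; apply: HF; lia].
Qed.

Lemma aentE n (A : 'M[C]_n) (i j : 'I_n) : aent A i.+1 j.+1 = A i j.
Proof. by rewrite /aent /= !valK. Qed.

Lemma aent_outl n (A : 'M[C]_n) i j : (n < i)%N -> aent A i j = 0.
Proof.
move=> H; rewrite /aent insubN //; last by rewrite -ltnS; case: i H => //= i; lia.
Qed.

Lemma aent_outr n (A : 'M[C]_n) i j : (n < j)%N -> aent A i j = 0.
Proof.
move=> H; rewrite /aent; case: (insub i.-1) => [?|//].
rewrite (@insubN _ (fun x : nat => (x < n)%N) _ j.-1) //.
by case: j H => //= j; rewrite -leqNgt; lia.
Qed.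

Lemma gel1 n (A : 'M[C]_n) i j : gel A 1 i j = aent A i j.
Proof. by []. Qed.

Lemma gelS n (A : 'M[C]_n) k i j : (0 < k)%N -> (k < i)%N -> (k < j)%N ->
  gel A k.+1 i j = gel A k i j - gel A k i k * gel A k k j / gel A k k k.
Proof. by move=> h1 h2 h3 /=; rewrite h1 h2 h3. Qed.

Definition schur n (A : 'M[C]_(1 + n)) : 'M[C]_n :=
  drsubmx A - (A ord0 ord0)^-1 *: (dlsubmx A *m ursubmx A).

Lemma schurE n (A : 'M[C]_(1 + n)) (i j : 'I_n) :
  schur A i j = A (lift ord0 i) (lift ord0 j)
     - A (lift ord0 i) ord0 * A ord0 (lift ord0 j) / A ord0 ord0.
Proof.
rewrite /schur !mxE big_ord1 !mxE.
have -> : rshift 1 i = lift ord0 i by apply: val_inj.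
have -> : rshift 1 j = lift ord0 j by apply: val_inj.
have -> : lshift n (0 : 'I_1) = ord0 by apply: val_inj.
by rewrite mulrC.
Qed.

Lemma gel2_schur n (A : 'M[C]_(1 + n)) i j : (1 < i)%N -> (1 < j)%N ->
  gel A 2 i j = gel (schur A) 1 i.-1 j.-1.
Proof.
move=> Hi Hj; rewrite gelS // !gel1.
case: i Hi => [|[|i]] // _; case: j Hj => [|[|j]] // _ /=.
case: (ltnP i n) => Hin; last first.
  by rewrite (@aent_outl _ A i.+2 j.+2) ?(@aent_outl _ A i.+2 1) ?(@aent_outl _ (schur A) i.+1 j.+1) ?mul0r ?subr0 //; lia.
case: (ltnP j n) => Hjn; last first.
  by rewrite (@aent_outr _ A i.+2 j.+2) ?(@aent_outr _ A 1 j.+2) ?(@aent_outr _ (schur A) i.+1 j.+1) ?mulr0 ?mul0r ?subr0 //; lia.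
rewrite (aentE (schur A) (Ordinal Hin) (Ordinal Hjn)) schurE.
rewrite -[i.+2]/((lift ord0 (Ordinal Hin) : nat).+1).
rewrite -[j.+2]/((lift ord0 (Ordinal Hjn) : nat).+1).
rewrite -[1%N]/((@ord0 n : nat).+1) !aentE.
done.
Qed.

Lemma gel_schur n (A : 'M[C]_(1 + n)) k : (0 < k)%N -> forall i j,
  (k < i)%N -> (k < j)%N -> gel A k.+1 i j = gel (schur A) k i.-1 j.-1.
Proof.
elim: k => [//|[|k] IH] _ i j Hi Hj; first exact: gel2_schur.
rewrite gelS // !IH //.
rewrite (@gelS _ (schur A) k.+1) //; try lia.
all: lia.
Qed.

Lemma ulsub_ord0 n (A : 'M[C]_(1 + n)) : ulsubmx A = (A ord0 ord0)%:M.
Proof.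
rewrite [LHS]mx11_scalar !mxE.
have -> : lshift n (0 : 'I_1) = ord0 by apply: val_inj.
by [].
Qed.

Lemma det_schur n (A : 'M[C]_(1 + n)) : A ord0 ord0 != 0 ->
  \det A = A ord0 ord0 * \det (schur A).
Proof.
move=> Ha.
have HA : A = block_mx 1%:M 0 ((A ord0 ord0)^-1 *: dlsubmx A) 1%:M *m
              block_mx (ulsubmx A) (ursubmx A) 0 (schur A).
  rewrite mulmx_block !mul1mx !mul0mx !addr0 ?add0r.
  rewrite -{1}(submxK A); congr block_mx.
    by rewrite ulsub_ord0 -scalemxAl mul_mx_scalar scalerA mulVf // scale1r.
  by rewrite /schur -scalemxAl addrC subrK.
rewrite {1}HA det_mulmx det_lblock det_ublock !det1 mul1r.
by rewrite mul1r ulsub_ord0 det_mx11 mxE.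
Qed.
End Aux.


Section Scal.
Variable C : numClosedFieldType.
Variables (e d : C).
Hypotheses (Hd1 : -1 < d) (Hd0 : d <= 0) (He : 0 <= e).

Lemma sc_pos : 0 < 1 + d.
Proof. by have := Hd1; rewrite -subr_gt0 opprK addrC. Qed.

Lemma sc_le1 : 1 + d <= 1.
Proof. by rewrite gerDl. Qed.

Lemma sc_r_ge : 1 + e <= (1 + e) / (1 + d).
Proof.
rewrite ler_pdivlMr ?sc_pos //.
by apply: ler_piMr; [rewrite addr_ge0 | exact: sc_le1].
Qed.

Lemma sc_r_ge1 : 1 <= (1 + e) / (1 + d).
Proof. by apply: le_trans sc_r_ge; rewrite lerDl. Qed.

Lemma sc_r2 : 0 <= ((1 + e) / (1 + d)) ^+ 2 - 1.
Proof. by rewrite subr_ge0 expr_ge1 // ?sc_r_ge1 // (le_trans ler01 sc_r_ge1). Qed.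

Lemma sc_key : e - d <= (1 + d) * (((1 + e) / (1 + d)) ^+ 2 - 1).
Proof.
have hp := sc_pos.
have -> : (1 + d) * (((1 + e) / (1 + d)) ^+ 2 - 1) =
          (e - d) + (1 + e) * ((1 + e) / (1 + d) - 1).
  by field; rewrite gt_eqF.
rewrite lerDl mulr_ge0 ?subr_ge0 ?sc_r_ge1 //.
by rewrite addr_ge0.
Qed.
End Scal.

Section Term.
Variable C : numClosedFieldType.
Variables (eps delta g : nat -> C) (N : nat).
Hypothesis Hed : forall k, (1 <= k <= N.-1)%N ->
  -1 < delta k /\ delta k <= 0 /\ 0 <= eps k.

Definition gterm m0 l :=
  ((((1 + eps l) / (1 + delta l)) ^+ 2 - 1) * `|g l|)
        / (\prod_(m0 <= p < l) (1 + delta p))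
      + \sum_(m0 <= m < l)
          ((eps m - delta m) * `|g m|)
            / (\prod_(m0 <= p < m.+1) (1 + delta p)).

Definition T m0 := \big[Num.max/0]_(m0 <= l < N) gterm m0 l.

Lemma gterm_step m0 l : (m0 < l)%N ->
  gterm m0 l = (gterm m0.+1 l + (eps m0 - delta m0) * `|g m0|) / (1 + delta m0).
Proof.
move=> Hl; rewrite /gterm [\prod_(m0 <= p < l) _]big_ltn // [\sum_(m0 <= m < l) _]big_ltn // big_nat1.
have -> : \sum_(m0.+1 <= m < l) (eps m - delta m) * `|g m| / \prod_(m0 <= p < m.+1) (1 + delta p)
   = (\sum_(m0.+1 <= m < l) (eps m - delta m) * `|g m|
     / \prod_(m0.+1 <= p < m.+1) (1 + delta p)) / (1 + delta m0).
  rewrite big_distrl /=; apply: eq_big_nat => m Hm.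
  by rewrite (@big_ltn _ _ _ m0); [rewrite invfM !mulrA mulrAC | lia].
rewrite invfM.
set X := (_ * `|g l|); set Y := (eps m0 - delta m0) * `|g m0|.
set S := \sum_(_ <= _ < _) _; set P := \prod_(_ <= _ < _) _.
ring.
Qed.

Lemma prod_pos a b : (1 <= a)%N -> (b <= N)%N ->
  0 < \prod_(a <= p < b) (1 + delta p).
Proof.
move=> Ha Hb; rewrite big_nat_cond; apply: prodr_gt0 => p /andP[/andP[H1 H2] _].
by case: (Hed (k:=p) ltac:(lia)) => h1 [h2 h3]; apply: sc_pos.
Qed.

Lemma gterm_ge0 m0 l : (1 <= m0)%N -> (m0 <= l)%N -> (l < N)%N -> 0 <= gterm m0 l.
Proof.
move=> H1 H2 H3; apply: addr_ge0.
  apply: divr_ge0; last by apply: ltW; apply: prod_pos; lia.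
  case: (Hed (k:=l) ltac:(lia)) => h1 [h2 h3].
  by apply: mulr_ge0 => //; apply: sc_r2.
rewrite big_nat_cond; apply: sumr_ge0 => m /andP[/andP[Hm1 Hm2] _].
apply: divr_ge0; last by apply: ltW; apply: prod_pos; lia.
case: (Hed (k:=m) ltac:(lia)) => h1 [h2 h3].
by apply: mulr_ge0 => //; rewrite subr_ge0 (le_trans h2 h3).
Qed.

Lemma T_ge0 m0 : (1 <= m0)%N -> 0 <= T m0.
Proof.
move=> H; rewrite /T; apply: my_bigmax_ge0 => l Hl; apply: ger0_real; apply: gterm_ge0; lia.
Qed.

Lemma le_T m0 l : (1 <= m0)%N -> (m0 <= l < N)%N -> gterm m0 l <= T m0.
Proof.
move=> H1 H2; rewrite /T; apply: my_le_bigmax => // k Hk; apply: ger0_real; apply: gterm_ge0; lia.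
Qed.

Lemma T_mono1 m : (1 <= m)%N -> T m.+1 <= T m.
Proof.
move=> Hm; rewrite {1}/T; apply: my_bigmax_le; first exact: T_ge0.
move=> l Hl; apply: le_trans (le_T (l:=l) _ _); try lia.
rewrite (@gterm_step m l); last lia.
case: (Hed (k:=m) ltac:(lia)) => h1 [h2 h3].
have hp := sc_pos h1.
have hx : 0 <= gterm m.+1 l by apply: gterm_ge0; lia.
have hy : 0 <= (eps m - delta m) * `|g m| by rewrite mulr_ge0 // subr_ge0 (le_trans h2 h3).
rewrite ler_pdivlMr //; apply: le_trans (_ : gterm m.+1 l <= _).
  by apply: ler_piMr => //; apply: sc_le1.
by rewrite lerDl.
Qed.

Lemma T_mono m m' : (1 <= m <= m')%N -> T m' <= T m.
Proof.
move=> /andP[H1]; elim: m' => [|m' IH] H2; first lia.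
case: (ltngtP m m'.+1) => H3; [|lia|by rewrite H3].
by apply: le_trans (T_mono1 _) (IH _); lia.
Qed.

Lemma T_first : (2 <= N)%N ->
  (((1 + eps 1) / (1 + delta 1)) ^+ 2 - 1) * `|g 1| <= T 1.
Proof.
move=> HN; apply: le_trans (le_T (m0:=1) (l:=1) _ _); last lia; last done.
by rewrite /gterm !big_geq // divr1 addr0.
Qed.

Lemma T_rec : (2 <= N)%N ->
  T 2 + (eps 1 - delta 1) * `|g 1| <= (1 + delta 1) * T 1.
Proof.
move=> HN; rewrite -lerBrDr.
case: (Hed (k:=1) ltac:(lia)) => h1 [h2 h3].
have hp := sc_pos h1.
apply: my_bigmax_le.
  rewrite subr_ge0; apply: le_trans (_ : _ <= (1 + delta 1) * ((((1 + eps 1) / (1 + delta 1)) ^+ 2 - 1) * `|g 1|)) _.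
    by rewrite mulrA; apply: ler_wpM2r => //; apply: sc_key.
  by apply: ler_wpM2l; [apply: ltW | apply: T_first].
move=> l Hl; rewrite lerBrDr -ler_pdivrMl // mulrC.
by rewrite -gterm_step; [apply: le_T; lia | lia].
Qed.
End Term.

Lemma T_shift (C : numClosedFieldType) (eps delta : nat -> C) n (A : 'M[C]_(1 + n)) m :
  (1 <= m)%N ->
  T eps delta (fun l => gel A l l l) (1 + n) m.+1 =
  T (fun k => eps k.+1) (fun k => delta k.+1) (fun l => gel (schur A) l l l) n m.
Proof.
move=> Hm; rewrite /T big_add1; apply: eq_big_nat => l Hl.
rewrite /gterm gel_schur; try lia.
rewrite big_add1; congr (_ / _ + _).
rewrite big_add1; apply: eq_big_nat => k Hk.
by rewrite gel_schur; try lia; rewrite big_add1.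
Qed.

Lemma ge_boundE (C : numClosedFieldType) (eps delta : nat -> C) n (A : 'M[C]_n) i j :
  ge_bound eps delta A i j = T eps delta (fun l => gel A l l l) n (minn i j).
Proof. by []. Qed.


Section Main.
Variable C : numClosedFieldType.
Variable isR : bool.
Local Notation SD := (Sdom isR).

Lemma CP_trivial n (A : 'M[C]_n) eps delta : (n <= 1)%N ->
  CP eps SD A -> CP delta SD A.
Proof. by move=> Hn [h1 h2 h3 h4]; split => // k Hk; lia. Qed.

Lemma gel111 n (A : 'M[C]_(1 + n)) : gel A 1 1 1 = A ord0 ord0.
Proof. exact: (aentE A ord0 ord0). Qed.

Lemma gel_schurS n (A : 'M[C]_(1 + n)) k i j : (0 < k)%N -> (k <= i)%N -> (k <= j)%N ->
  gel A k.+1 i.+1 j.+1 = gel (schur A) k i j.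
Proof. by move=> h1 h2 h3; rewrite (@gel_schur C n A k h1 i.+1 j.+1). Qed.

Lemma CP_schur n (A : 'M[C]_(1 + n)) eps : (1 <= n)%N ->
  CP eps SD A -> CP (fun k => eps k.+1) SD (schur A).
Proof.
move=> Hn [h1 h2 h3 h4].
have Ha : A ord0 ord0 != 0 by rewrite -gel111; apply: h3; lia.
split.
- move=> i j; rewrite schurE; move: (h1 (lift ord0 i) (lift ord0 j))
    (h1 (lift ord0 i) ord0) (h1 ord0 (lift ord0 j)) (h1 ord0 ord0).
  rewrite /Sdom; case: isR => // r1 r2 r3 r4.
  by rewrite rpredB // rpredM // ?rpredM // rpredV.
- move: h2; rewrite !unitmxE (det_schur Ha) unitrM => /andP[] //.
- move=> k Hk; rewrite -gel_schurS //; try lia.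
  by apply: h3; lia.
- move=> k i j Hk Hi Hj Hij.
  rewrite -(@gel_schurS n A k i j) //; try lia.
  rewrite -(@gel_schurS n A k k k) //; try lia.
  apply: h4; try lia.
  by move: Hij; apply: contra => /eqP [-> ->].
Qed.

Definition mkB n (A : 'M[C]_(1 + n)) (BS : 'M[C]_n) (c : C) : 'M[C]_(1 + n) :=
  block_mx ((c ^+ 2 * A ord0 ord0)%:M) (c *: ursubmx A) (c *: dlsubmx A)
    (BS + (A ord0 ord0)^-1 *: (dlsubmx A *m ursubmx A)).

Section MkB.
Variables (n : nat) (A : 'M[C]_(1 + n)) (BS : 'M[C]_n) (c : C).
Local Notation B := (mkB A BS c).

Let E0 : ord0 = lshift n (0 : 'I_1). Proof. exact: val_inj. Qed.
Let El (i : 'I_n) : lift ord0 i = rshift 1 i. Proof. exact: val_inj. Qed.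

Lemma mkB00 : B ord0 ord0 = c ^+ 2 * A ord0 ord0.
Proof. by rewrite /mkB [in LHS]E0 block_mxEul mxE eqxx mulr1n -E0. Qed.

Lemma mkB0l j : B ord0 (lift ord0 j) = c * A ord0 (lift ord0 j).
Proof. by rewrite /mkB [in LHS]El [in LHS]E0 block_mxEur !mxE -E0 -El. Qed.

Lemma mkBl0 i : B (lift ord0 i) ord0 = c * A (lift ord0 i) ord0.
Proof. by rewrite /mkB [in LHS]El [in LHS]E0 block_mxEdl !mxE -E0 -El. Qed.

Lemma mkBll i j : B (lift ord0 i) (lift ord0 j) =
  BS i j + A (lift ord0 i) ord0 * A ord0 (lift ord0 j) / A ord0 ord0.
Proof.
rewrite /mkB [in LHS]El [in LHS]El block_mxEdr !mxE big_ord1 !mxE.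
by rewrite -!El -E0 mulrC.
Qed.

Lemma schur_mkB : c != 0 -> A ord0 ord0 != 0 -> schur B = BS.
Proof.
move=> Hc Ha; apply/matrixP => i j.
rewrite schurE mkBll mkBl0 mkB0l mkB00.
by field; rewrite Ha Hc.
Qed.

Lemma aentB11 : aent B 1 1 = c ^+ 2 * A ord0 ord0.
Proof. by rewrite (aentE B ord0 ord0) mkB00. Qed.

Lemma aentA11 : aent A 1 1 = A ord0 ord0.
Proof. exact: (aentE A ord0 ord0). Qed.

Lemma aentB1j j : (1 < j)%N -> aent B 1 j = c * aent A 1 j.
Proof.
case: j => [|[|j]] // _.
case: (ltnP j n) => Hj; last by rewrite (@aent_outr C _ B 1 j.+2) ?(@aent_outr C _ A 1 j.+2) ?mulr0 //; lia.
rewrite -[j.+2]/((lift ord0 (Ordinal Hj) : nat).+1) -[1%N]/((@ord0 n : nat).+1).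
by rewrite !aentE mkB0l.
Qed.

Lemma aentBi1 i : (1 < i)%N -> aent B i 1 = c * aent A i 1.
Proof.
case: i => [|[|i]] // _.
case: (ltnP i n) => Hi; last by rewrite (@aent_outl C _ B i.+2 1) ?(@aent_outl C _ A i.+2 1) ?mulr0 //; lia.
rewrite -[i.+2]/((lift ord0 (Ordinal Hi) : nat).+1) -[1%N]/((@ord0 n : nat).+1).
by rewrite !aentE mkBl0.
Qed.
End MkB.

Lemma aux_canc (a c z w : C) : c != 0 -> a != 0 ->
  c * z * (c * w) / (c ^+ 2 * a) = z * w / a.
Proof. by move=> Hc Ha; field; rewrite Hc Ha. Qed.

Lemma aux_sub (x y p : C) : x - y = x - p - (y - p).
Proof. by ring. Qed.

Lemma ge_bound_shift n (A : 'M[C]_(1 + n)) (eps delta : nat -> C) i j :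
  (1 <= i)%N -> (1 <= j)%N ->
  ge_bound (fun k => eps k.+1) (fun k => delta k.+1) (schur A) i j =
  ge_bound eps delta A i.+1 j.+1.
Proof.
move=> Hi Hj; rewrite !ge_boundE minnSS T_shift //; lia.
Qed.

Ltac nlia :=
  repeat match goal with
  | H : is_true (leq _ _) |- _ => revert H
  | H : is_true (_ && _) |- _ => revert H
  | H : @eq nat _ _ |- _ => revert H
  end;
  repeat match goal with H : _ |- _ => clear H end;
  intros; lia.

Lemma main_ind n : forall eps delta : nat -> C,
  (forall k, (1 <= k <= n.-1)%N -> -1 < delta k /\ delta k <= 0 /\ 0 <= eps k) ->
  forall A : 'M[C]_n, CP eps SD A ->
  exists B : 'M[C]_n,
    CP delta SD B /\
    (forall k, (1 <= k <= n)%N -> gel B k n n = gel A k n n) /\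
    (forall k i j, (1 <= k <= n)%N -> (k <= i <= n)%N -> (k <= j <= n)%N ->
       `|gel B k i j - gel A k i j| <= ge_bound eps delta A i j).
Proof.
elim: n => [|n IH] eps delta Hed A HA.
  exists A; split; first by apply: CP_trivial HA.
  by split => [k Hk|k i j Hk]; nlia.
case: (posnP n) => [Hn0|Hn].
  subst n; exists A; split; first by apply: CP_trivial HA.
  split => // k i j Hk Hi Hj; rewrite subrr normr0 ge_boundE.
  by apply: (T_ge0 _ Hed); nlia.
have [h1 h2 h3 h4] := HA.
pose g := fun l => gel A l l l.
have Ha : A ord0 ord0 != 0 by rewrite -(gel111 A); apply: h3; nlia.
have HS := CP_schur Hn HA.
have Hed' : forall k, (1 <= k <= n.-1)%N ->
    -1 < delta k.+1 /\ delta k.+1 <= 0 /\ 0 <= eps k.+1 by move=> k Hk; apply: Hed; nlia.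
have [BS [HBS [HBSn HBSb]]] := IH _ _ Hed' _ HS.
have [hd1 [hd2 he]] := Hed 1%N ltac:(nlia).
have T1ge0 : 0 <= T eps delta g n.+1 1 by apply: (T_ge0 _ Hed).
have T2ge0 : 0 <= T eps delta g n.+1 2 by apply: (T_ge0 _ Hed).
have Hg1 : g 1%N = A ord0 ord0 by rewrite /g gel111.
have Hal : 0 < `|A ord0 ord0| by rewrite normr_gt0.
pose c2 := 1 + T eps delta g n.+1 1 / `|A ord0 ord0|.
have c2ge1 : 1 <= c2 by rewrite lerDl divr_ge0 // ltW.
have [c [Hc2 Hc0]] : exists c : C, c ^+ 2 = c2 /\ 0 <= c.
  by exists (sqrtC c2); rewrite sqrtCK sqrtC_ge0 (le_trans ler01).
have Hc1 : 1 <= c.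
  by rewrite -(@ler_pXn2r _ 2%N isT) ?nnegrE // ?expr1n ?Hc2 // ler01.
have Hcne : c != 0 by apply: lt0r_neq0; apply: lt_le_trans ltr01 Hc1.
have HTf := T_first g Hed (Hn : (2 <= n.+1)%N).
have Hcr : (1 + eps 1) / (1 + delta 1) <= c.
  have r0 : 0 <= (1 + eps 1) / (1 + delta 1) := le_trans ler01 (sc_r_ge1 hd1 hd2 he).
  rewrite -(@ler_pXn2r _ 2%N isT) ?nnegrE // Hc2 /c2 -lerBlDl.
  by rewrite ler_pdivlMr // -Hg1.
pose B := mkB A BS c.
exists B.
have Hsch : schur B = BS := @schur_mkB n A BS c Hcne Ha.
have HB00 : B ord0 ord0 = c ^+ 2 * A ord0 ord0 by rewrite mkB00.
have Hb : B ord0 ord0 != 0 by rewrite HB00 mulf_neq0 // expf_neq0.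
have Hnb : `|B ord0 ord0| = `|A ord0 ord0| + T eps delta g n.+1 1.
  rewrite HB00 normrM ger0_norm ?exprn_ge0 // Hc2 /c2 mulrDl mul1r mulfVK //.
  by rewrite gt_eqF.
have D1 : forall i j, (1 < i)%N -> (1 < j)%N ->
    gel B 1 i j - gel A 1 i j = gel BS 1 i.-1 j.-1 - gel (schur A) 1 i.-1 j.-1.
  move=> i j Hi Hj; rewrite -Hsch -!gel2_schur // [gel B 2 i j]gelS // [gel A 2 i j]gelS // !gel1.
  rewrite aentBi1 // aentB1j // aentB11 aentA11.
  move: (aent B i j) (aent A i j) (aent A i 1) (aent A 1 j) => x y z w.
  have -> : c * z * (c * w) / (c ^+ 2 * A ord0 ord0) = z * w / A ord0 ord0.
    exact: aux_canc.
  exact: aux_sub.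
have Bnd : forall k i j, (1 <= k)%N -> (k <= i <= n.+1)%N -> (k <= j <= n.+1)%N ->
    (1 < i)%N -> (1 < j)%N ->
    `|gel B k i j - gel A k i j| <= ge_bound eps delta A i j.
  move=> k i j Hk Hi Hj Hi1 Hj1.
  case: i Hi Hi1 => [|i] // Hi Hi1; case: j Hj Hj1 => [|j] // Hj Hj1.
  rewrite -ge_bound_shift //; try nlia.
  case: k Hk Hi Hj => [|[|k]] // _ Hi Hj.
    by rewrite D1 //; apply: HBSb; nlia.
  rewrite !gel_schurS ?Hsch //; try nlia.
  by apply: HBSb; nlia.
have HT1 : (c ^+ 2 - 1) * `|A ord0 ord0| = T eps delta g n.+1 1.
  by rewrite Hc2 /c2 addrC addKr divfK // gt_eqF.
have HcA : c ^+ 2 * `|A ord0 ord0| = `|A ord0 ord0| + T eps delta g n.+1 1.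
  by rewrite -Hnb HB00 normrM ger0_norm ?exprn_ge0.
have key1 : 1 + eps 1 <= c * (1 + delta 1).
  by rewrite -ler_pdivrMr ?sc_pos.
have Hc1e : 1 + eps 1 <= c + 1.
  apply: le_trans (sc_r_ge hd1 hd2 he) _; apply: le_trans Hcr _.
  by rewrite lerDl ler01.
have Hrow : forall j, (1 < j <= n.+1)%N -> `|aent A 1 j| <= (1 + eps 1) * `|A ord0 ord0|.
  move=> j Hj; rewrite -gel111; apply: (h4 1%N 1%N j); try nlia.
  by apply/eqP => [[]] Hj1; move: Hj; rewrite Hj1.
have Hcol : forall i, (1 < i <= n.+1)%N -> `|aent A i 1| <= (1 + eps 1) * `|A ord0 ord0|.
  move=> i Hi; rewrite -gel111; apply: (h4 1%N i 1%N); try nlia.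
  by apply/eqP => [[]] Hi1; move: Hi; rewrite Hi1.
have Hsm : forall x, `|x| <= (1 + eps 1) * `|A ord0 ord0| ->
    `|c * x| <= (1 + delta 1) * (`|A ord0 ord0| + T eps delta g n.+1 1).
  move=> x Hx; rewrite normrM ger0_norm //.
  apply: le_trans (_ : _ <= c * ((c * (1 + delta 1)) * `|A ord0 ord0|)) _.
    apply: ler_wpM2l => //; apply: le_trans Hx _.
    by apply: ler_wpM2r => //; apply: normr_ge0.
  by rewrite -HcA le_eqVlt; apply/orP; left; apply/eqP; rewrite expr2; ring.
have Hdf : forall x, `|x| <= (1 + eps 1) * `|A ord0 ord0| ->
    `|c * x - x| <= T eps delta g n.+1 1.
  move=> x Hx; rewrite -{2}(mul1r x) -mulrBl normrM ger0_norm ?subr_ge0 //.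
  rewrite -HT1; apply: le_trans (_ : _ <= (c - 1) * ((1 + eps 1) * `|A ord0 ord0|)) _.
    by apply: ler_wpM2l; rewrite ?subr_ge0.
  have -> : c ^+ 2 - 1 = (c - 1) * (c + 1) by rewrite expr2; ring.
  rewrite -mulrA; apply: ler_wpM2l; rewrite ?subr_ge0 //.
  by apply: ler_wpM2r => //; apply: normr_ge0.
split.
  split.
  - move=> i j; case: HBS => hbs _ _ _; move: h1 hbs; rewrite /Sdom.
    case: isR => // hr hbs.
    have hc : c \is Num.real by apply: ger0_real.
    case: (unliftP ord0 i) => [i'|] ->; case: (unliftP ord0 j) => [j'|] ->.
    + by rewrite mkBll rpredD // rpredM // ?rpredM // rpredV.
    + by rewrite mkBl0 rpredM.
    + by rewrite mkB0l rpredM.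
    + by rewrite mkB00 rpredM // rpredX.
  - rewrite unitmxE (det_schur Hb) Hsch unitrM unitfE Hb /=.
    by case: HBS => _ + _ _; rewrite unitmxE.
  - case=> [|[|k]] Hk //; first by rewrite gel111.
    rewrite gel_schurS ?Hsch //; try nlia.
    by case: HBS => _ _ + _; apply; nlia.
  - move=> k i j Hk Hi Hj Hij.
    case: k Hk Hi Hj Hij => [|[|k]] // Hk Hi Hj Hij; last first.
      case: i Hi Hij => [|i] Hi Hij; first by exfalso; nlia.
      case: j Hj Hij => [|j] Hj Hij; first by exfalso; nlia.
      rewrite !gel_schurS ?Hsch //; try nlia.
      case: HBS => _ _ _; apply; try nlia.
      by move: Hij; apply: contra => /eqP [-> ->].
    rewrite gel111 Hnb.
    have [Hi1|Hi1] : i = 1%N \/ (1 < i)%N by nlia.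
      subst i; have Hj1 : (1 < j)%N by case: j Hij Hj => [|[|j]] //; nlia.
      by rewrite gel1 aentB1j //; apply: Hsm; apply: Hrow; nlia.
    have [Hj1|Hj1] : j = 1%N \/ (1 < j)%N by nlia.
      by subst j; rewrite gel1 aentBi1 //; apply: Hsm; apply: Hcol; nlia.
    rewrite -(subrK (gel A 1 i j) (gel B 1 i j)).
    apply: le_trans (ler_normD _ _) _.
    have HB1 := Bnd 1%N i j isT ltac:(nlia) ltac:(nlia) Hi1 Hj1.
    have HBm : ge_bound eps delta A i j <= T eps delta g n.+1 2.
      by rewrite ge_boundE; apply: (T_mono g Hed); nlia.
    have HA1 : `|gel A 1 i j| <= (1 + eps 1) * `|A ord0 ord0|.
      rewrite -gel111; apply: h4; try nlia.
      by apply/eqP => [[]] Hi2; move: Hi1; rewrite Hi2.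
    have HTr := T_rec g Hed (Hn : (2 <= n.+1)%N); rewrite Hg1 in HTr.
    apply: le_trans (lerD (le_trans HB1 HBm) HA1) _.
    have -> : T eps delta g n.+1 2 + (1 + eps 1) * `|A ord0 ord0| =
      (1 + delta 1) * `|A ord0 ord0| + (T eps delta g n.+1 2 + (eps 1 - delta 1) * `|A ord0 ord0|) by ring.
    by rewrite mulrDr lerD2l.
split.
  case=> [|[|k]] Hk //.
    by apply/eqP; rewrite -subr_eq0 D1 // subr_eq0; apply/eqP; apply: HBSn; nlia.
  by rewrite !gel_schurS ?Hsch //; try nlia; apply: HBSn; nlia.
move=> k i j Hk Hi Hj.
have [Hi1|Hi1] : i = 1%N \/ (1 < i)%N by nlia.
  have Hk1 : k = 1%N by nlia.
  subst k i; rewrite ge_boundE (_ : minn 1 j = 1%N); last by nlia.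
  have [Hj1|Hj1] : j = 1%N \/ (1 < j)%N by nlia.
    subst j; rewrite !gel111 HB00 -{2}(mul1r (A ord0 ord0)) -mulrBl normrM.
    by rewrite ger0_norm ?HT1 // subr_ge0 Hc2.
  by rewrite !gel1 aentB1j //; apply: Hdf; apply: Hrow; nlia.
have [Hj1|Hj1] : j = 1%N \/ (1 < j)%N by nlia.
  have Hk1 : k = 1%N by nlia.
  subst k j; rewrite ge_boundE (_ : minn i 1 = 1%N); last by nlia.
  by rewrite !gel1 aentBi1 //; apply: Hdf; apply: Hcol; nlia.
by apply: Bnd; nlia.
Qed.
End Main.


Theorem mainTheorem3 (R : realType) (isR : bool) (n : nat)
    (eps delta : nat -> R[i]) :
  (forall k, (1 <= k <= n.-1)%N -> -1 < delta k /\ delta k <= 0 /\ 0 <= eps k) ->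
  forall A : 'M[R[i]]_n, CP eps (Sdom isR) A ->
  exists B : 'M[R[i]]_n,
    CP delta (Sdom isR) B /\
    (forall k, (1 <= k <= n)%N -> gel B k n n = gel A k n n) /\
    (forall k i j, (1 <= k <= n)%N -> (k <= i <= n)%N -> (k <= j <= n)%N ->
       `|gel B k i j - gel A k i j| <= ge_bound eps delta A i j).
Proof. exact: (@main_ind _ isR n eps delta). Qed.
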